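(* Consider the four-oscillator system below with $A=-1$ (so $K_\mathrm{s}=0$, $K_\mathrm{n}=1$) and $\alpha_\mathrm{s}=\alpha_\mathrm{n}=0$. Then the function $$H^{(-1,0)}(\psi_1,\psi_3)=\cot\!\left(\frac{\psi_1+\psi_3}{4}\right)\tan\!\left(\frac{\psi_1-\psi_3}{4}\right)$$ (with $\psi_1,\psi_3$ the real-valued phase differences of a solution) is constant along every solution on any time interval on which it is defined (i.e. on which $(\psi_1+\psi_3)/4\notin\pi\mathbb{Z}$ and $(\psi_1-\psi_3)/4\notin \pi/2+\pi\mathbb{Z}$).
   Context: Network of $M=2$ populations of $N=2$ phase oscillators with phases $\theta_{\sigma,k}(t)\in\mathbb{R}$ (population $\sigma\in\{1,2\}$, oscillator $k\in\{1,2\}$), evolving by $$\dot\theta_{\sigma,k}=\omega+\frac{K_\mathrm{s}}{4}\sum_{j=1}^{2}\sin(\theta_{\sigma,j}-\theta_{\sigma,k}-\alpha_\mathrm{s})+\frac{K_\mathrm{n}}{4}\sum_{j=1}^{2}\sin(\theta_{\tau,j}-\theta_{\sigma,k}-\alpha_\mathrm{n}),$$ where $\tau$ denotes the population other than $\sigma$, $\omega\in\mathbb{R}$, $\alpha_\mathrm{s},\alpha_\mathrm{n}\in\mathbb{R}$ are phase lags, and the coupling strengths are parametrized by $A\in\mathbb{R}$ via $K_\mathrm{s}=(1+A)/2$, $K_\mathrm{n}=(1-A)/2$ (so $K_\mathrm{s}+K_\mathrm{n}=1$, $A=K_\mathrm{s}-K_\mathrm{n}$). The phase differences are $\psi_1=\theta_{1,1}-\theta_{1,2}$,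 $\psi_2=\theta_{1,2}-\theta_{2,1}$, $\psi_3=\theta_{2,1}-\theta_{2,2}$; they satisfy an autonomous ODE (the reduced system) since the right-hand side depends only on phase differences. *)

(* Defs.v *)
From Stdlib Require Import Reals.
From Coquelicot Require Import Coquelicot.
Open Scope R_scope.

(* Phases: th s k t = theta_{s,k}(t), population s in {1,2}, oscillator k in {1,2}. *)
Definition other_pop (s : nat) : nat := if Nat.eqb s 1 then 2%nat else 1%nat.

Definition Ks (A : R) : R := (1 + A) / 2.
Definition Kn (A : R) : R := (1 - A) / 2.

Definition osc_rhs (om A als aln : R) (th : nat -> nat -> R -> R)
  (s k : nat) (t : R) : R :=
  om
  + Ks A / 4 * (sin (th s 1%nat t - th s k t - als) + sin (th s 2%nat t - th s k t - als))
  + Kn A / 4 * (sin (th (other_pop s) 1%nat t - th s k t - aln)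
                + sin (th (other_pop s) 2%nat t - th s k t - aln)).

Definition is_solution (om A als aln : R) (th : nat -> nat -> R -> R) (a b : Rbar) : Prop :=
  forall (s k : nat) (t : R),
    (s = 1%nat \/ s = 2%nat) -> (k = 1%nat \/ k = 2%nat) ->
    Rbar_lt a t -> Rbar_lt t b ->
    is_derive (th s k) t (osc_rhs om A als aln th s k t).

Definition psi1 (th : nat -> nat -> R -> R) (t : R) : R := th 1%nat 1%nat t - th 1%nat 2%nat t.
Definition psi3 (th : nat -> nat -> R -> R) (t : R) : R := th 2%nat 1%nat t - th 2%nat 2%nat t.

Definition cot (x : R) : R := cos x / sin x.

Definition H_m1_0 (p1 p3 : R) : R := cot ((p1 + p3) / 4) * tan ((p1 - p3) / 4).

Definition H_defined (p1 p3 : R) : Prop :=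
  (forall n : Z, (p1 + p3) / 4 <> IZR n * PI) /\
  (forall n : Z, (p1 - p3) / 4 <> PI / 2 + IZR n * PI).

(* Main.v *)
Require Import Defs.
From Stdlib Require Import Reals Lra.
From Coquelicot Require Import Coquelicot.
Open Scope R_scope.

Lemma alg (x y z w : R) :
  let d1 := 1/4*(sin(z-x)+sin(w-x)) - 1/4*(sin(z-y)+sin(w-y)) in
  let d3 := 1/4*(sin(x-z)+sin(y-z)) - 1/4*(sin(x-w)+sin(y-w)) in
  let U := ((x-y)+(z-w))/4 in let V := ((x-y)-(z-w))/4 in
  -((d1+d3)/4) * (sin V * cos V) + (d1-d3)/4 * (sin U * cos U) = 0.
Proof.
  intros d1 d3 U V.
  assert (HU: sin U * cos U = sin (2*U)/2) by (rewrite sin_2a; field).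
  assert (HV: sin V * cos V = sin (2*V)/2) by (rewrite sin_2a; field).
  rewrite HU, HV. unfold d1, d3, U, V. clear.
  set (m := (x+y)/2). set (p := (x-y)/2). set (n := (z+w)/2). set (q := (z-w)/2).
  replace (z-x) with ((n-m)+(q-p)) by (unfold m,n,p,q; field).
  replace (w-x) with ((n-m)-(q+p)) by (unfold m,n,p,q; field).
  replace (z-y) with ((n-m)+(q+p)) by (unfold m,n,p,q; field).
  replace (w-y) with ((n-m)+(p-q)) by (unfold m,n,p,q; field).
  replace (x-z) with (-(n-m)-(q-p)) by (unfold m,n,p,q; field).
  replace (y-z) with (-(n-m)-(q+p)) by (unfold m,n,p,q; field).
  replace (x-w) with (-(n-m)+(q+p)) by (unfold m,n,p,q; field).
  replace (y-w) with (-(n-m)-(p-q)) by (unfold m,n,p,q; field).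
  replace (2 * (((x - y) + (z - w)) / 4)) with (p+q) by (unfold m,n,p,q; field).
  replace (2 * (((x - y) - (z - w)) / 4)) with (p-q) by (unfold m,n,p,q; field).
  repeat (rewrite sin_plus || rewrite sin_minus || rewrite cos_plus || rewrite cos_minus || rewrite sin_neg || rewrite cos_neg).
  clearbody m n p q. field.
Qed.

Lemma key (om : R) (th : nat -> nat -> R -> R) (a b : Rbar) (t : R) :
  is_solution om (-1) 0 0 th a b -> Rbar_lt a t -> Rbar_lt t b ->
  H_defined (psi1 th t) (psi3 th t) ->
  is_derive (fun t => H_m1_0 (psi1 th t) (psi3 th t)) t 0.
Proof.
  intros Hsol Ha Hb [Hd1 Hd3].
  assert (Hd : forall s k, (s = 1 \/ s = 2)%nat -> (k = 1 \/ k = 2)%nat ->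
     is_derive (th s k) t (osc_rhs om (-1) 0 0 th s k t)).
  { intros s k Hs Hk; apply Hsol; auto. }
  pose proof (Hd 1%nat 1%nat (or_introl eq_refl) (or_introl eq_refl)) as D11.
  pose proof (Hd 1%nat 2%nat (or_introl eq_refl) (or_intror eq_refl)) as D12.
  pose proof (Hd 2%nat 1%nat (or_intror eq_refl) (or_introl eq_refl)) as D21.
  pose proof (Hd 2%nat 2%nat (or_intror eq_refl) (or_intror eq_refl)) as D22.
  unfold psi1, psi3 in Hd1, Hd3.
  assert (Hs : sin ((th 1%nat 1%nat t + - th 1%nat 2%nat t +
      (th 2%nat 1%nat t + - th 2%nat 2%nat t)) * / 4) <> 0).
  { intro E. apply sin_eq_0_0 in E. destruct E as [k Ek]. apply (Hd1 k).
    rewrite <- Ek. unfold Rminus, Rdiv. reflexivity. }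
  assert (Hc : cos ((th 1%nat 1%nat t + - th 1%nat 2%nat t +
      - (th 2%nat 1%nat t + - th 2%nat 2%nat t)) * / 4) <> 0).
  { intro E. apply cos_eq_0_0 in E. destruct E as [k Ek]. apply (Hd3 k).
    unfold Rminus, Rdiv. rewrite Ek. field. }
  unfold H_m1_0, cot, tan, psi1, psi3.
  auto_derive.
  { repeat split; try (eexists; eassumption); assumption. }
  assert (E11 : Derive (fun x : R => th 1%nat 1%nat x) t = osc_rhs om (-1) 0 0 th 1%nat 1%nat t) by (apply is_derive_unique; exact D11).
  rewrite E11.
  assert (E12 : Derive (fun x : R => th 1%nat 2%nat x) t = osc_rhs om (-1) 0 0 th 1%nat 2%nat t) by (apply is_derive_unique; exact D12).
  rewrite E12.
  assert (E21 : Derive (fun x : R => th 2%nat 1%nat x) t = osc_rhs om (-1) 0 0 th 2%nat 1%nat t) by (apply is_derive_unique; exact D21).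
  rewrite E21.
  assert (E22 : Derive (fun x : R => th 2%nat 2%nat x) t = osc_rhs om (-1) 0 0 th 2%nat 2%nat t) by (apply is_derive_unique; exact D22).
  rewrite E22.

  set (U := (th 1%nat 1%nat t + - th 1%nat 2%nat t +
      (th 2%nat 1%nat t + - th 2%nat 2%nat t)) * / 4) in *.
  set (V := (th 1%nat 1%nat t + - th 1%nat 2%nat t +
      - (th 2%nat 1%nat t + - th 2%nat 2%nat t)) * / 4) in *.
  pose proof (alg (th 1%nat 1%nat t) (th 1%nat 2%nat t) (th 2%nat 1%nat t) (th 2%nat 2%nat t)) as A.
  cbv zeta in A.
  replace (((th 1%nat 1%nat t - th 1%nat 2%nat t) + (th 2%nat 1%nat t - th 2%nat 2%nat t)) / 4) with U in A by (unfold U; field).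
  replace (((th 1%nat 1%nat t - th 1%nat 2%nat t) - (th 2%nat 1%nat t - th 2%nat 2%nat t)) / 4) with V in A by (unfold V; field).
  unfold osc_rhs, Ks, Kn in *. change (other_pop 1) with 2%nat in *. change (other_pop 2) with 1%nat in *.
  set (x := th 1%nat 1%nat t) in *. set (y := th 1%nat 2%nat t) in *.
  set (z := th 2%nat 1%nat t) in *. set (w := th 2%nat 2%nat t) in *.
  pose proof (sin2_cos2 U) as PU. pose proof (sin2_cos2 V) as PV. unfold Rsqr in PU, PV.
  clearbody U V x y z w.
  set (sU := sin U) in *. set (cU := cos U) in *. set (sV := sin V) in *. set (cV := cos V) in *.
  rewrite !Rminus_0_r.
  set (e1 := sin (z - x)) in *. set (e2 := sin (w - x)) in *.
  set (e3 := sin (z - y)) in *. set (e4 := sin (w - y)) in *.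
  set (f1 := sin (x - z)) in *. set (f2 := sin (y - z)) in *.
  set (f3 := sin (x - w)) in *. set (f4 := sin (y - w)) in *.
  clearbody sU cU sV cV e1 e2 e3 e4 f1 f2 f3 f4.
  set (u := (1 / 4 * (e1 + e2) - 1 / 4 * (e3 + e4) + (1 / 4 * (f1 + f2) - 1 / 4 * (f3 + f4))) / 4) in *.
  set (v := (1 / 4 * (e1 + e2) - 1 / 4 * (e3 + e4) - (1 / 4 * (f1 + f2) - 1 / 4 * (f3 + f4))) / 4) in *.
  match goal with |- ?G = 0 =>
    transitivity ((-u*(sV*cV)*(sU*sU+cU*cU) + v*(sU*cU)*(sV*sV+cV*cV))/(sU*sU*(cV*cV))) end.
  { unfold u, v. field. auto. }
  rewrite PU, PV. unfold Rdiv. rewrite <- (Rmult_0_l (/ (sU*sU*(cV*cV)))). f_equal.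
  rewrite <- A. ring.
Qed.

Theorem mainTheorem3 :
  forall (om : R) (th : nat -> nat -> R -> R) (a b : Rbar),
    is_solution om (-1) 0 0 th a b ->
    forall t1 t2 : R,
      Rbar_lt a t1 -> Rbar_lt t1 b -> Rbar_lt a t2 -> Rbar_lt t2 b ->
      (forall t : R, Rmin t1 t2 <= t <= Rmax t1 t2 ->
         H_defined (psi1 th t) (psi3 th t)) ->
      H_m1_0 (psi1 th t1) (psi3 th t1) = H_m1_0 (psi1 th t2) (psi3 th t2).
Proof.
  intros om th a b Hsol t1 t2 Ha1 Hb1 Ha2 Hb2 Hdef.
  assert (Hin : forall x, Rmin t1 t2 <= x <= Rmax t1 t2 -> Rbar_lt a x /\ Rbar_lt x b).
  { intros x [H1 H2]. split.
    - apply Rbar_lt_le_trans with (Rmin t1 t2).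
      + apply Rmin_case; assumption.
      + exact H1.
    - apply Rbar_le_lt_trans with (Rmax t1 t2).
      + exact H2.
      + apply Rmax_case; assumption. }
  assert (HD : forall x, Rmin t1 t2 <= x <= Rmax t1 t2 ->
     is_derive (fun t => H_m1_0 (psi1 th t) (psi3 th t)) x 0).
  { intros x Hx. destruct (Hin x Hx). apply (key om th a b); auto. }
  destruct (MVT_gen (fun t => H_m1_0 (psi1 th t) (psi3 th t)) t1 t2 (fun _ => 0))
    as [c [_ Hc]].
  - intros x Hx. apply HD. lra.
  - intros x Hx. apply continuity_pt_filterlim.
    apply (ex_derive_continuous (fun t => H_m1_0 (psi1 th t) (psi3 th t))).
    eexists. apply HD. exact Hx.
  - simpl in Hc. lra.
Qed.
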